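(* Let $(L,\vee,\wedge,0,1)$ be a complemented lattice with $0\ne1$ and $a,b,c\in L$. Then: (i) $a\to0=a^+$ and $1\to a=\{a\}$; (ii) if $a\le b$ then $a\to b=\{1\}$; (iii) $a\to b=\{1\}$ if and only if $a\wedge b\in a^{++}$; (iv) if $b\in a^+$ then $a\to b=a^+$; (v) if $b\le c$ then $a\to b\le_i a\to c$ for $i=1,2$; (vi) if $a\to b=a\to c=\{1\}$ and $a^{++}$ is closed under $\wedge$, then $a\to(b\wedge c)=\{1\}$; (vii) if $a^{++}\subseteq b^{++}$ and $a\to b=\{1\}$, then $b\to a=\{1\}$.
   Context: For $a\in L$, $a^+:=\{x\in L\mid a\vee x=1,\ a\wedge x=0\}$ (the set of all complements of $a$); for $A\subseteq L$, $A^+:=\{x\in L\mid a\vee x=1\text{ and }a\wedge x=0\text{ for all }a\in A\}$, and $a^{++}:=(a^+)^+$. For $A,B\subseteq L$: $A\vee B:=\{x\vee y\mid x\in A,y\in B\}$; $A\le_1B$ means for every $x\in A$ there is $y\in B$ with $x\le y$; $A\le_2B$ means for every $y\in B$ there is $x\in A$ with $x\le y$. For $a,b\in L$, $a\to b:=a^+\vee\{a\wedge b\}=\{x\vee(a\wedge b)\mid x\in a^+\}$. *)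

(* Defs.v *)
From mathcomp Require Import all_boot all_order.
Set Implicit Arguments. Unset Strict Implicit. Unset Printing Implicit Defensive.
Import Order.TTheory.
Local Open Scope order_scope.

(* Subsets of L are predicates L -> Prop; equality of subsets is Leibniz
   equality of predicates (extensional by funext/propext). *)
Section CompLat.
Context {d : Order.disp_t} {L : tbLatticeType d}.

Definition complemented : Prop :=
  forall a : L, exists x : L, a `|` x = \top /\ a `&` x = \bot.

Definition cplt (a : L) : L -> Prop :=
  fun x => a `|` x = \top /\ a `&` x = \bot.

Definition cpltS (A : L -> Prop) : L -> Prop :=
  fun x => forall a, A a -> a `|` x = \top /\ a `&` x = \bot.

Definition cplt2 (a : L) : L -> Prop := cpltS (cplt a).

Definition joinS (A B : L -> Prop) : L -> Prop :=
  fun z => exists x y, A x /\ B y /\ z = x `|` y.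

Definition sing (a : L) : L -> Prop := fun z => z = a.

Definition imp (a b : L) : L -> Prop := joinS (cplt a) (sing (a `&` b)).

Definition le1 (A B : L -> Prop) : Prop :=
  forall x, A x -> exists y, B y /\ x <= y.

Definition le2 (A B : L -> Prop) : Prop :=
  forall y, B y -> exists x, A x /\ x <= y.

Definition meetclosedS (S : L -> Prop) : Prop :=
  forall x y, S x -> S y -> S (x `&` y).

Definition subsetS (A B : L -> Prop) : Prop := forall x, A x -> B x.

End CompLat.

(* Main.v *)
Require Import Defs.
From mathcomp Require Import all_boot all_order.
From Stdlib Require Import FunctionalExtensionality PropExtensionality.
Import Order.TTheory.
Local Open Scope order_scope.

Lemma pext {T : Type} (P Q : T -> Prop) : (forall z, P z <-> Q z) -> P = Q.
Proof. move=> H; apply: functional_extensionality => z; apply: propositional_extensionality; exact: H. Qed.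

Section S.
Context {d : Order.disp_t} {L : tbLatticeType d}.
Hypothesis Hcompl : complemented (L := L).

Lemma imp_top (a b : L) :
  imp a b = sing \top <-> forall x, cplt a x -> x `|` (a `&` b) = \top.
Proof.
split.
- move=> E x Hx. have : imp a b (x `|` (a `&` b)) by exists x, (a `&` b).
  by rewrite E.
- move=> H; apply: pext => z; split.
  + by case=> [x [y [Hx [-> ->]]]]; apply: H.
  + move=> ->; have [x Hx] := Hcompl a.
    by exists x, (a `&` b); split; [|split] => //; rewrite H.
Qed.

Lemma cplt2_iff (a b : L) :
  cplt2 a (a `&` b) <-> forall x, cplt a x -> x `|` (a `&` b) = \top.
Proof.
split.
- by move=> H x Hx; have [H1 _] := H x Hx.
- move=> H x Hx; split; first by apply: H.
  case: Hx => _ Hx. by rewrite meetA (meetC x) Hx meet0x.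
Qed.

Lemma iii (a b : L) : imp a b = sing \top <-> cplt2 a (a `&` b).
Proof. by rewrite imp_top cplt2_iff. Qed.
End S.

Theorem theorem3 (d : Order.disp_t) (L : tbLatticeType d)
  (Hcompl : complemented (L := L)) (H01 : (\bot : L) != \top) (a b c : L) :
  (* (i) *)
  (imp a \bot = cplt a /\ imp \top a = sing a) /\
  (* (ii) *)
  (a <= b -> imp a b = sing \top) /\
  (* (iii) *)
  (imp a b = sing \top <-> cplt2 a (a `&` b)) /\
  (* (iv) *)
  (cplt a b -> imp a b = cplt a) /\
  (* (v) *)
  (b <= c -> le1 (imp a b) (imp a c) /\ le2 (imp a b) (imp a c)) /\
  (* (vi) *)
  (imp a b = sing \top -> imp a c = sing \top -> meetclosedS (cplt2 a) ->
     imp a (b `&` c) = sing \top) /\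
  (* (vii) *)
  (subsetS (cplt2 a) (cplt2 b) -> imp a b = sing \top -> imp b a = sing \top).
Proof.
split; [split|].
  apply: pext => z; split.
    by case=> [x [y [Hx [-> ->]]]]; rewrite meetx0 joinx0.
  by move=> Hz; exists z, (a `&` \bot); do 2?split => //; rewrite meetx0 joinx0.
  apply: pext => z; split.
    case=> [x [y [[Hx1 Hx2] [-> ->]]]]. rewrite meet1x in Hx2; by rewrite Hx2 meet1x join0x.
  move=> ->; exists \bot, (\top `&` a); split; last by rewrite meet1x join0x.
  by split; [rewrite joinx0|rewrite meetx0].
split.
  move=> Hab; apply/(imp_top Hcompl) => x [Hx _].
  by move/meet_idPl: Hab => ->; rewrite joinC.
split; first exact: iii.
split.
  move=> [_ Hb]; apply: pext => z; split.
    by case=> [x [y [Hx [-> ->]]]]; rewrite Hb joinx0.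
  by move=> Hz; exists z, (a `&` b); do 2?split => //; rewrite Hb joinx0.
split.
  move=> Hbc; split.
    move=> _ [x [y [Hx [-> ->]]]]; exists (x `|` (a `&` c)); split.
      by exists x, (a `&` c).
    by rewrite leUx leUl /= (le_trans _ (leUr _ _)) // leI2 // lexx.
  move=> _ [x [y [Hx [-> ->]]]]; exists (x `|` (a `&` b)); split.
    by exists x, (a `&` b).
  by rewrite leUx leUl /= (le_trans _ (leUr _ _)) // leI2 // lexx.
split.
  move=> /(iii Hcompl) Hb /(iii Hcompl) Hc Hm; apply/(iii Hcompl).
  have := Hm _ _ Hb Hc. by rewrite meetACA meetxx.
move=> Hs /(iii Hcompl) H; apply/(iii Hcompl); rewrite meetC; exact: Hs.
Qed.
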